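(* Let $b\in\mathbb N$, $b\ge 2$. Then there exists $m\in\mathbb N$ such that $m$ is antipalindromic in base $b$ and also antipalindromic in at least one other integer base $c\ge 2$ with $c\neq b$ and $c<m$.
   Context: For an integer $b\ge 2$, every natural number $x$ has a unique base-$b$ expansion $x=a_\ell b^\ell+\dots+a_1b+a_0$ with $a_0,\dots,a_\ell\in\{0,1,\dots,b-1\}$ and $a_\ell\neq 0$. The number $x$ is antipalindromic in base $b$ if $a_j=b-1-a_{\ell-j}$ for all $j\in\{0,1,\dots,\ell\}$. *)

(* Defs.v *)
From mathcomp Require Import all_boot.
Set Implicit Arguments. Unset Strict Implicit. Unset Printing Implicit Defensive.

(* Base-b digits of x, least significant first: digits b x = [:: a_0; ...; a_l]
   with a_l <> 0 (for x > 0, b >= 2); digits b 0 = [::]. *)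
Fixpoint digits_aux (fuel b x : nat) : seq nat :=
  match fuel with
  | 0 => [::]
  | f.+1 => if x == 0 then [::] else (x %% b) :: digits_aux f b (x %/ b)
  end.

Definition digits (b x : nat) : seq nat := digits_aux x b x.

(* x is antipalindromic in base b: with l + 1 = number of digits,
   a_j = b - 1 - a_{l-j} for all j in {0,...,l}. Natural numbers x >= 1
   (the expansion requires a nonzero leading digit). *)
Definition antipalindromic (b x : nat) : Prop :=
  0 < x /\
  let s := digits b x in
  let l := (size s).-1 in
  forall j, j <= l -> nth 0 s j = b - 1 - nth 0 s (l - j).

(* Main.v *)
Require Import Defs.
From mathcomp Require Import all_boot.
From mathcomp Require Import zify.

Lemma digits2 B a0 a1 : 0 < a1 < B -> a0 < B ->
  digits B (a1 * B + a0) = [:: a0; a1].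
Proof.
move=> /andP[h1 h2] h0.
have hB : 0 < B by lia.
have Hm : (a1 * B + a0) %% B = a0 by rewrite modnMDl modn_small.
have Hd : (a1 * B + a0) %/ B = a1 by rewrite divnMDl // divn_small // addn0.
have Hx : 2 <= a1 * B + a0 by nia.
rewrite /digits; move: Hm Hd Hx; set x := a1 * B + a0.
case: x => [|[|n]] // Hm Hd _ /=.
rewrite Hm Hd.
have -> : (a1 == 0) = false by apply/eqP; lia.
rewrite modn_small //.
rewrite divn_small //.
case: n Hm Hd => [|n] _ _ //.
Qed.

Lemma anti2 B a0 a1 : 0 < a1 < B -> a0 < B -> a0 = B - 1 - a1 ->
  antipalindromic B (a1 * B + a0).
Proof.
move=> h1 h0 e; split; first by nia.
rewrite digits2 //= => j hj.
case: j hj => [|[|]] //= _; lia.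
Qed.

Theorem mainTheorem15 (b : nat) (hb : 2 <= b) :
  exists m : nat, antipalindromic b m /\
    exists c : nat, [/\ 2 <= c, c != b, c < m & antipalindromic c m].
Proof.
case: (ltnP 2 b) => hb3.
- exists ((b - 1) * b + 0); split.
    apply: anti2; lia.
  exists b.+1; split.
  - lia.
  - apply/eqP; lia.
  - nia.
  - have -> : (b - 1) * b + 0 = (b - 2) * b.+1 + 2 by nia.
    apply: anti2; lia.
- have -> : b = 2 by lia.
  exists (5 * 2 + 0); split.
    split => //= j hj.
    by case: j hj => [|[|[|[|]]]].
  exists 6; split => //.
  have -> : 5 * 2 + 0 = 1 * 6 + 4 by [].
  apply: anti2 => //.
Qed.
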